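(* Let $\Gamma>0$ be an ordinal, $\mathcal{M}=(W,R,V)$ a Kripke model, $w_0\in W$, and $\varphi_0$ a sentence of the modal $\mu$-calculus in normal form. Then $\mathcal{M},w_0\vDash^\Gamma\varphi_0$ if and only if $\mathcal{M},w_0\Vdash^\Gamma\varphi_0$, i.e. $\varphi_0$ is true at $w_0$ under $\Gamma$-bounded compositional semantics iff Eloise has a winning strategy in the $\Gamma$-bounded evaluation game $(\mathcal{M},w_0,\varphi_0,\Gamma)$.
   Context: Formulae of the modal $\mu$-calculus over proposition symbols $\Phi$ and label symbols $\Lambda$: $\varphi ::= p \mid \neg p \mid X \mid \varphi\vee\varphi \mid \varphi\wedge\varphi \mid \Diamond\varphi \mid \Box\varphi \mid \mu X\varphi \mid \nu X\varphi$. $\mathrm{Sub}(\varphi)$ is the set of occurrences (nodes of the syntax tree); $\mathrm{Sub}_{\mu\nu}(\varphi)$ those of form $\mu X\psi$ or $\nu X\psi$. A sentence has no free label occurrences. Normal form: each label symbol occurs at most once in a $\mu$- or $\nu$-operator. For an atomic occurrence $X$ in a sentence $\varphi_0$, $\mathrm{rf}(X)$ is the nearest ancestor occurrence of the form $\mu X\psi$ or $\nu X\psi$. $\Gamma$-bounded compositional semantics ($\mathcal{M}=(W,R,V)$, assignment $s:\Lambda\to\mathcal{P}(W)$): $\mathcal{M},w\vDash^\Gamma_s p$ iff $w\in V(p)$; $\neg p$ iff $w\notin V(p)$; $X$ iff $w\in s(X)$; $\vee,\wedge$ as usual; $\Diamond\psi$ iff some $v$ with $wRv$ satisfies $\psi$;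 $\Box\psi$ iff all $v$ with $wRv$ satisfy $\psi$; $\mathcal{M},w\vDash^\Gamma_s\mu X\psi$ iff $w\in F^\Gamma_\mu$ and $\mathcal{M},w\vDash^\Gamma_s\nu X\psi$ iff $w\in F^\Gamma_\nu$, where $F(A)=\{v\in W\mid\mathcal{M},v\vDash^\Gamma_{s[A/X]}\psi\}$ ($s[A/X]$ agrees with $s$ except $X\mapsto A$), and for $F:\mathcal{P}(W)\to\mathcal{P}(W)$: $F^0_\mu=\emptyset$, $F^{\beta+1}_\mu=F(F^\beta_\mu)$, $F^\lambda_\mu=\bigcup_{\delta<\lambda}F^\delta_\mu$ ($\lambda$ limit); $F^0_\nu=W$, $F^{\beta+1}_\nu=F(F^\beta_\nu)$, $F^\lambda_\nu=\bigcap_{\delta<\lambda}F^\delta_\nu$ ($\lambda$ limit). For a sentence truth does not depend on $s$, written $\mathcal{M},w\vDash^\Gamma\varphi$. The $\Gamma$-bounded evaluation game $(\mathcal{M},w_0,\varphi_0,\Gamma)$: players Eloise and Abelard; positions $(w,\varphi,c)$ with $w\in W$, $\varphi\in\mathrm{Sub}(\varphi_0)$, $c:\mathrm{Sub}_{\mu\nu}(\varphi_0)\to\{\gamma\mid\gamma\le\Gamma\}$; initial position $(w_0,\varphi_0,c_0)$ with $c_0\equiv\Gamma$. Rules: at $(w,p,c)$ Eloise wins iff $w\in V(p)$, else Abelard wins; at $(w,\neg p,c)$ Eloise wins iff $w\notin V(p)$, else Abelard; at $(w,\psi\vee\theta,c)$ Eloise picks $(w,\psi,c)$ or $(w,\theta,c)$;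 at $(w,\psi\wedge\theta,c)$ Abelard picks; at $(w,\Diamond\psi,c)$ Eloise picks $v$ with $wRv$, next $(v,\psi,c)$, and Abelard wins if there is none; at $(w,\Box\psi,c)$ Abelard picks $v$ with $wRv$, next $(v,\psi,c)$, and Eloise wins if there is none; at $(w,\mu X\psi,c)$ Eloise picks $\gamma<\Gamma$, next $(w,\psi,c[\gamma/\mu X\psi])$; at $(w,\nu X\psi,c)$ Abelard picks $\gamma<\Gamma$, next $(w,\psi,c[\gamma/\nu X\psi])$. At $(w,X,c)$ with $\gamma=c(\mathrm{rf}(X))$: if $\mathrm{rf}(X)=\mu X\psi$, then Abelard wins if $\gamma=0$, otherwise Eloise picks $\gamma'<\gamma$ and play moves to $(w,\psi,c')$ with $c'(\mu X\psi)=\gamma'$, $c'(\theta)=\Gamma$ for all $\theta\in\mathrm{Sub}_{\mu\nu}(\varphi_0)$ occurring inside $\psi$, and $c'(\theta)=c(\theta)$ otherwise; if $\mathrm{rf}(X)=\nu X\psi$, symmetrically Eloise wins if $\gamma=0$, otherwise Abelard picks $\gamma'<\gamma$ with the same clock update. A strategy for Eloise is a partial function on positions giving her choice at each position where she must move; it is winning if she can always follow it and wins every play in which she follows it. $\mathcal{M},w_0\Vdash^\Gamma\varphi_0$ iff Eloise has a winning strategy in $(\mathcal{M},w_0,\varphi_0,\Gamma)$. *)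

(* Defs.v *)
From Stdlib Require Import List Bool.
Import ListNotations.
Set Implicit Arguments.

(* ---------- Ordinals <= Gamma ----------
   An ordinal Gamma is represented by the well-ordered set of all ordinals
   gamma <= Gamma: a strict well-founded total order with a greatest element
   [top] (= Gamma).  Every well-order with a maximum is isomorphic to
   {gamma | gamma <= Gamma} for a unique ordinal Gamma, and conversely. *)
Record ordinal_upto := {
  ord :> Type;
  olt : ord -> ord -> Prop;
  olt_wf : well_founded olt;
  olt_trans : forall a b c, olt a b -> olt b c -> olt a c;
  olt_total : forall a b, olt a b \/ a = b \/ olt b a;
  top : ord;
  top_max : forall a, a = top \/ olt a top
}.

Section Iteration.
Variable G : ordinal_upto.
Variable W : Type.
Variable F : (W -> Prop) -> (W -> Prop).

Definition is_pred (b g : G) : Prop :=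
  olt G b g /\ forall d, olt G d g -> ~ olt G b d.

(* F^gamma_mu: F^0 = empty, F^(beta+1) = F(F^beta), F^lambda = U_{delta<lambda} F^delta.
   (0 and limits have no immediate predecessor; for 0 the union is empty.) *)
Definition iter_mu : G -> W -> Prop :=
  Fix (olt_wf G) (fun _ => W -> Prop)
    (fun g rec w =>
       (exists b (h : olt G b g), is_pred b g /\ F (rec b h) w) \/
       ((~ exists b, is_pred b g) /\ exists d (h : olt G d g), rec d h w)).

(* F^gamma_nu: F^0 = W, F^(beta+1) = F(F^beta), F^lambda = /\_{delta<lambda} F^delta. *)
Definition iter_nu : G -> W -> Prop :=
  Fix (olt_wf G) (fun _ => W -> Prop)
    (fun g rec w =>
       (exists b (h : olt G b g), is_pred b g /\ F (rec b h) w) \/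
       ((~ exists b, is_pred b g) /\ forall d (h : olt G d g), rec d h w)).
End Iteration.

Inductive form (P L : Type) : Type :=
| FProp : P -> form P L
| FNProp : P -> form P L
| FVar : L -> form P L
| FOr : form P L -> form P L -> form P L
| FAnd : form P L -> form P L -> form P L
| FDia : form P L -> form P L
| FBox : form P L -> form P L
| FMu : L -> form P L -> form P L
| FNu : L -> form P L -> form P L.
Arguments FProp {P L}. Arguments FNProp {P L}. Arguments FVar {P L}.
Arguments FOr {P L}. Arguments FAnd {P L}. Arguments FDia {P L}.
Arguments FBox {P L}. Arguments FMu {P L}. Arguments FNu {P L}.

(* Occurrences (nodes of the syntax tree) are addressed by paths from the root;
   false = left/only child, true = right child. *)
Definition path := list bool.

Fixpoint subf {P L} (phi : form P L) (p : path) : option (form P L) :=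
  match p with
  | [] => Some phi
  | b :: p' =>
    match phi with
    | FOr a c | FAnd a c => subf (if b then c else a) p'
    | FDia a | FBox a | FMu _ a | FNu _ a => if b then None else subf a p'
    | _ => None
    end
  end.

Fixpoint free_in {P L} (X : L) (phi : form P L) : Prop :=
  match phi with
  | FProp _ | FNProp _ => False
  | FVar Y => Y = X
  | FOr a b | FAnd a b => free_in X a \/ free_in X b
  | FDia a | FBox a => free_in X a
  | FMu Y a | FNu Y a => Y <> X /\ free_in X a
  end.

Definition sentence {P L} (phi : form P L) : Prop := forall X, ~ free_in X phi.

Definition binds {P L} (phi0 : form P L) (p : path) (X : L) : Prop :=
  exists a, subf phi0 p = Some (FMu X a) \/ subf phi0 p = Some (FNu X a).

Definition normal_form {P L} (phi0 : form P L) : Prop :=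
  forall X p1 p2, binds phi0 p1 X -> binds phi0 p2 X -> p1 = p2.

(* rf: pb is the nearest ancestor of the atomic occurrence p (labelled X)
   of the form muX psi or nuX psi *)
Definition rf {P L} (phi0 : form P L) (p pb : path) : Prop :=
  exists X, subf phi0 p = Some (FVar X) /\ binds phi0 pb X /\
    (exists s, p = pb ++ s) /\
    forall s1 s2, p = pb ++ s1 ++ s2 -> s1 <> [] -> ~ binds phi0 (pb ++ s1) X.

Definition upd {L W} (s : L -> W -> Prop) (X : L) (A : W -> Prop) : L -> W -> Prop :=
  fun Y w => (Y = X /\ A w) \/ (Y <> X /\ s Y w).

Fixpoint sem (G : ordinal_upto) {P L W : Type} (R : W -> W -> Prop) (V : P -> W -> Prop)
  (phi : form P L) (s : L -> W -> Prop) : W -> Prop :=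
  match phi with
  | FProp p => fun w => V p w
  | FNProp p => fun w => ~ V p w
  | FVar X => s X
  | FOr a b => fun w => sem G R V a s w \/ sem G R V b s w
  | FAnd a b => fun w => sem G R V a s w /\ sem G R V b s w
  | FDia a => fun w => exists v, R w v /\ sem G R V a s v
  | FBox a => fun w => forall v, R w v -> sem G R V a s v
  | FMu X a => iter_mu G (fun A => sem G R V a (upd s X A)) (top G)
  | FNu X a => iter_nu G (fun A => sem G R V a (upd s X A)) (top G)
  end.

(* M, w |=^Gamma phi0 for a sentence phi0 (truth is independent of s) *)
Definition sem_holds (G : ordinal_upto) {P L W : Type} (R : W -> W -> Prop)
  (V : P -> W -> Prop) (phi0 : form P L) (w : W) : Prop :=
  forall s, sem G R V phi0 s w.

Fixpoint prefixb (p q : path) : bool :=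
  match p, q with
  | [], _ => true
  | b :: p', c :: q' => Bool.eqb b c && prefixb p' q'
  | _ :: _, [] => false
  end.

Definition is_mu_nu {P L} (o : option (form P L)) : bool :=
  match o with Some (FMu _ _) | Some (FNu _ _) => true | _ => false end.

Section Game.
Variable G : ordinal_upto.
Variables P L W : Type.
Variable R : W -> W -> Prop.
Variable V : P -> W -> Prop.
Variable phi0 : form P L.

(* clocks: only their values on mu/nu-occurrences matter *)
Definition clock := path -> G.

Record pos := Pos { pw : W; pocc : path; pclk : clock }.

Definition set_clock (c : clock) (p : path) (g : G) : clock :=
  fun q => if list_eq_dec bool_dec q p then g else c q.

Definition reset_clock (c : clock) (pb : path) (g : G) : clock :=
  fun q => if prefixb (pb ++ [false]) q && is_mu_nu (subf phi0 q) then top G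
           else set_clock c pb g q.

Definition is_zero (g : G) : Prop := forall d, ~ olt G d g.

Inductive choice :=
| ChLeft | ChRight | ChWorld (v : W) | ChOrd (g : G).

Definition strategy := pos -> option choice.

(* win sigma p : sigma is winning for Eloise from position p, i.e. she can
   always follow sigma and every play from p following sigma is finite and
   won by her (inductive = well-founded play tree). *)
Inductive win (sigma : strategy) : pos -> Prop :=
| win_prop : forall w p c q, subf phi0 p = Some (FProp q) -> V q w ->
    win sigma (Pos w p c)
| win_nprop : forall w p c q, subf phi0 p = Some (FNProp q) -> ~ V q w ->
    win sigma (Pos w p c)
| win_or_l : forall w p c a b, subf phi0 p = Some (FOr a b) ->
    sigma (Pos w p c) = Some ChLeft -> win sigma (Pos w (p ++ [false]) c) ->
    win sigma (Pos w p c)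
| win_or_r : forall w p c a b, subf phi0 p = Some (FOr a b) ->
    sigma (Pos w p c) = Some ChRight -> win sigma (Pos w (p ++ [true]) c) ->
    win sigma (Pos w p c)
| win_and : forall w p c a b, subf phi0 p = Some (FAnd a b) ->
    win sigma (Pos w (p ++ [false]) c) -> win sigma (Pos w (p ++ [true]) c) ->
    win sigma (Pos w p c)
| win_dia : forall w p c a v, subf phi0 p = Some (FDia a) ->
    sigma (Pos w p c) = Some (ChWorld v) -> R w v ->
    win sigma (Pos v (p ++ [false]) c) -> win sigma (Pos w p c)
| win_box : forall w p c a, subf phi0 p = Some (FBox a) ->
    (forall v, R w v -> win sigma (Pos v (p ++ [false]) c)) ->
    win sigma (Pos w p c)
| win_mu : forall w p c X a g, subf phi0 p = Some (FMu X a) ->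
    sigma (Pos w p c) = Some (ChOrd g) -> olt G g (top G) ->
    win sigma (Pos w (p ++ [false]) (set_clock c p g)) -> win sigma (Pos w p c)
| win_nu : forall w p c X a, subf phi0 p = Some (FNu X a) ->
    (forall g, olt G g (top G) -> win sigma (Pos w (p ++ [false]) (set_clock c p g))) ->
    win sigma (Pos w p c)
| win_var_mu : forall w p c pb X a g, rf phi0 p pb -> subf phi0 pb = Some (FMu X a) ->
    sigma (Pos w p c) = Some (ChOrd g) -> olt G g (c pb) ->
    win sigma (Pos w (pb ++ [false]) (reset_clock c pb g)) -> win sigma (Pos w p c)
| win_var_nu : forall w p c pb X a, rf phi0 p pb -> subf phi0 pb = Some (FNu X a) ->
    (forall g, olt G g (c pb) -> win sigma (Pos w (pb ++ [false]) (reset_clock c pb g))) ->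
    win sigma (Pos w p c).

Definition game_holds (w0 : W) : Prop :=
  exists sigma : strategy, win sigma (Pos w0 [] (fun _ => top G)).
End Game.

(* Main.v *)
Require Import Defs.
From Stdlib Require Import List Bool Arith Classical ClassicalEpsilon FunctionalExtensionality PropExtensionality.
Import ListNotations.

Module Part1.
Set Implicit Arguments.

Section Iter.
Variable G : ordinal_upto.
Variable W : Type.

Lemma iter_mu_unfold (F : (W -> Prop) -> W -> Prop) g w :
  iter_mu G F g w <->
  (exists b, olt G b g /\ is_pred G b g /\ F (iter_mu G F b) w) \/
  ((~ exists b, is_pred G b g) /\ exists d, olt G d g /\ iter_mu G F d w).
Proof.
  unfold iter_mu at 1. rewrite Fix_eq.
  - split.
    + intros [[b [h [H1 H2]]]|[H1 [d [h H2]]]]; [left; eauto | right; eauto].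
    + intros [[b [h [H1 H2]]]|[H1 [d [h H2]]]]; [left; eauto | right; eauto].
  - intros x f f' Hf. assert (f = f') as ->; [|reflexivity].
    extensionality y. extensionality p. apply Hf.
Qed.

Lemma iter_nu_unfold (F : (W -> Prop) -> W -> Prop) g w :
  iter_nu G F g w <->
  (exists b, olt G b g /\ is_pred G b g /\ F (iter_nu G F b) w) \/
  ((~ exists b, is_pred G b g) /\ forall d, olt G d g -> iter_nu G F d w).
Proof.
  unfold iter_nu at 1. rewrite Fix_eq.
  - split.
    + intros [[b [h [H1 H2]]]|[H1 H2]]; [left; eauto | right; split; auto].
    + intros [[b [h [H1 H2]]]|[H1 H2]]; [left; eauto | right; split; auto].
  - intros x f f' Hf. assert (f = f') as ->; [|reflexivity].
    extensionality y. extensionality p. apply Hf.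
Qed.

Definition monoF (F : (W -> Prop) -> W -> Prop) :=
  forall A B : W -> Prop, (forall w, A w -> B w) -> forall w, F A w -> F B w.

Lemma notpred_between (b g : G) : olt G b g -> ~ is_pred G b g ->
  exists d, olt G d g /\ olt G b d.
Proof.
  intros H1 H2. apply NNPP. intro H3. apply H2. split; auto.
  intros d Hd Hbd. apply H3. eauto.
Qed.

Lemma le_pred : forall (b g x : G), is_pred G b g -> olt G x g -> x = b \/ olt G x b.
Proof.
  intros b g x [Hb Hp] Hx. destruct (olt_total G x b) as [H|[H|H]]; auto.
  exfalso. exact (Hp x Hx H).
Qed.

Lemma mu_all (F : (W -> Prop) -> W -> Prop) (HF : monoF F) g :
  (forall h, olt G h g -> forall w, F (iter_mu G F h) w -> iter_mu G F g w) /\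
  (forall w, iter_mu G F g w -> exists h, olt G h g /\ F (iter_mu G F h) w) /\
  (forall h, olt G h g -> forall w, iter_mu G F h w -> iter_mu G F g w).
Proof.
  induction g as [g IH] using (well_founded_ind (olt_wf G)).
  destruct (classic (exists b, is_pred G b g)) as [[b Hb]|Hnp].
  - assert (A1 : forall h, olt G h g -> forall w, F (iter_mu G F h) w -> iter_mu G F g w).
    { intros h Hh w Hw. apply iter_mu_unfold. left. exists b.
      split; [apply Hb|]. split; auto.
      destruct (le_pred h Hb Hh) as [->|Hhb]; auto.
      eapply HF; [|exact Hw]. apply (proj2 (proj2 (IH b (proj1 Hb))) h); auto. }
    split; [exact A1|]. split.
    + intros w Hw. apply iter_mu_unfold in Hw.
      destruct Hw as [[b' [H1 [H2 H3]]]|[H1 _]]; eauto.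
      exfalso; eauto.
    + intros h Hh w Hw. destruct (IH h Hh) as [_ [B _]].
      destruct (B w Hw) as [k [Hk Hk']].
      apply (A1 k); auto. eapply olt_trans; eauto.
  - split; [|split].
    + intros h Hh w Hw.
      assert (~ is_pred G h g) by (intro; apply Hnp; eauto).
      destruct (notpred_between Hh H) as [d [Hd Hhd]].
      apply iter_mu_unfold. right. split; auto. exists d. split; auto.
      apply (proj1 (IH d Hd) h); auto.
    + intros w Hw. apply iter_mu_unfold in Hw.
      destruct Hw as [[b' [H1 [H2 H3]]]|[_ [d [Hd Hw]]]].
      * exfalso; eauto.
      * destruct (IH d Hd) as [_ [B _]]. destruct (B w Hw) as [k [Hk Hk']].
        exists k. split; auto. eapply olt_trans; eauto.
    + intros h Hh w Hw. apply iter_mu_unfold. right. split; auto. eauto.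
Qed.

Lemma mu_char (F : (W -> Prop) -> W -> Prop) (HF : monoF F) g w :
  iter_mu G F g w <-> exists h, olt G h g /\ F (iter_mu G F h) w.
Proof.
  destruct (mu_all HF g) as [A [B _]]. split; auto.
  intros [h [Hh Hw]]; eauto.
Qed.

Lemma nu_all (F : (W -> Prop) -> W -> Prop) (HF : monoF F) g :
  (forall h, olt G h g -> forall w, iter_nu G F g w -> F (iter_nu G F h) w) /\
  (forall w, (forall h, olt G h g -> F (iter_nu G F h) w) -> iter_nu G F g w) /\
  (forall h, olt G h g -> forall w, iter_nu G F g w -> iter_nu G F h w).
Proof.
  induction g as [g IH] using (well_founded_ind (olt_wf G)).
  destruct (classic (exists b, is_pred G b g)) as [[b Hb]|Hnp].
  - assert (A1 : forall h, olt G h g -> forall w, iter_nu G F g w -> F (iter_nu G F h) w).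
    { intros h Hh w Hw. apply iter_nu_unfold in Hw.
      destruct Hw as [[b' [H1 [H2 H3]]]|[H1 _]]; [|exfalso; eauto].
      destruct (le_pred h H2 Hh) as [->|Hhb]; auto.
      eapply HF; [|exact H3]. apply (proj2 (proj2 (IH b' H1)) h); auto. }
    split; [exact A1|]. split.
    + intros w Hw. apply iter_nu_unfold. left. exists b.
      split; [apply Hb|]. split; auto. apply Hw, Hb.
    + intros h Hh w Hw. destruct (IH h Hh) as [_ [B _]].
      apply B. intros k Hk. apply A1; auto. eapply olt_trans; eauto.
  - split; [|split].
    + intros h Hh w Hw.
      assert (~ is_pred G h g) by (intro; apply Hnp; eauto).
      destruct (notpred_between Hh H) as [d [Hd Hhd]].
      apply iter_nu_unfold in Hw.
      destruct Hw as [[b' [H1 [H2 H3]]]|[_ Hw]]; [exfalso; eauto|].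
      apply (proj1 (IH d Hd) h); auto.
    + intros w Hw. apply iter_nu_unfold. right. split; auto.
      intros d Hd. destruct (IH d Hd) as [_ [B _]]. apply B.
      intros k Hk. apply Hw. eapply olt_trans; eauto.
    + intros h Hh w Hw. apply iter_nu_unfold in Hw.
      destruct Hw as [[b' [H1 [H2 H3]]]|[_ Hw]]; [exfalso; eauto|auto].
Qed.

Lemma nu_char (F : (W -> Prop) -> W -> Prop) (HF : monoF F) g w :
  iter_nu G F g w <-> forall h, olt G h g -> F (iter_nu G F h) w.
Proof.
  destruct (nu_all HF g) as [A [B _]]. split; eauto.
Qed.

Lemma mu_mono (F F' : (W -> Prop) -> W -> Prop) (HF : monoF F) (HF' : monoF F')
  (H : forall A B : W -> Prop, (forall w, A w -> B w) -> forall w, F A w -> F' B w) g w :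
  iter_mu G F g w -> iter_mu G F' g w.
Proof.
  revert w. induction g as [g IH] using (well_founded_ind (olt_wf G)).
  intros w Hw. apply (mu_char HF) in Hw. apply (mu_char HF').
  destruct Hw as [h [Hh Hw]]. exists h. split; auto. eapply H; [|exact Hw]. auto.
Qed.

Lemma nu_mono (F F' : (W -> Prop) -> W -> Prop) (HF : monoF F) (HF' : monoF F')
  (H : forall A B : W -> Prop, (forall w, A w -> B w) -> forall w, F A w -> F' B w) g w :
  iter_nu G F g w -> iter_nu G F' g w.
Proof.
  revert w. induction g as [g IH] using (well_founded_ind (olt_wf G)).
  intros w Hw. rewrite (nu_char HF) in Hw. apply (nu_char HF').
  intros h Hh. eapply H; [|apply Hw; exact Hh]. auto.
Qed.
End Iter.

End Part1.
Import Part1.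

Module Part2.
Set Implicit Arguments.

Section Sem.
Variable G : ordinal_upto.
Variables P L W : Type.
Variable R : W -> W -> Prop.
Variable V : P -> W -> Prop.

Lemma upd_mono (s s' : L -> W -> Prop) X (A B : W -> Prop) :
  (forall Y w, s Y w -> s' Y w) -> (forall w, A w -> B w) ->
  forall Y w, upd s X A Y w -> upd s' X B Y w.
Proof. unfold upd; intros H1 H2 Y w [[? ?]|[? ?]]; auto. Qed.

Lemma sem_mono (phi : form P L) : forall s s' : L -> W -> Prop,
  (forall Y w, s Y w -> s' Y w) -> forall w, sem G R V phi s w -> sem G R V phi s' w.
Proof.
  induction phi; simpl; intros s s' Hs w Hw; auto.
  - destruct Hw; [left|right]; eauto.
  - destruct Hw; split; eauto.
  - destruct Hw as [v [? ?]]; eauto.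
  - intros v Hv; eauto.
  - eapply mu_mono; [| | | exact Hw];
      intros A B HAB; apply IHphi; apply upd_mono; auto.
  - eapply nu_mono; [| | | exact Hw];
      intros A B HAB; apply IHphi; apply upd_mono; auto.
Qed.

Lemma monoF_sem (a : form P L) s X : monoF (fun A => sem G R V a (upd s X A)).
Proof. intros A B HAB. apply sem_mono, upd_mono; auto. Qed.

Fixpoint envf (phi : form P L) (p : path) (c : path -> G) (s : L -> W -> Prop)
  {struct p} : L -> W -> Prop :=
  match p with
  | [] => s
  | b :: p' =>
    match phi with
    | FOr a d | FAnd a d => envf (if b then d else a) p' (fun q => c (b :: q)) s
    | FDia a | FBox a => envf a p' (fun q => c (b :: q)) s
    | FMu X a => envf a p' (fun q => c (b :: q))
        (upd s X (iter_mu G (fun A => sem G R V a (upd s X A)) (c [])))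
    | FNu X a => envf a p' (fun q => c (b :: q))
        (upd s X (iter_nu G (fun A => sem G R V a (upd s X A)) (c [])))
    | _ => s
    end
  end.

Lemma subf_app (phi : form P L) p q :
  subf phi (p ++ q) = match subf phi p with Some psi => subf psi q | None => None end.
Proof.
  revert phi; induction p as [|b p IH]; intros phi.
  - destruct phi; reflexivity.
  - destruct phi; simpl; auto; destruct b; simpl; auto.
Qed.

Lemma subf_nil (phi : form P L) : subf phi [] = Some phi.
Proof. destruct phi; reflexivity. Qed.

Lemma envf_snoc p : forall (phi : form P L) c s psi b,
  subf phi p = Some psi ->
  envf phi (p ++ [b]) c s = envf psi [b] (fun q => c (p ++ q)) (envf phi p c s).
Proof.
  induction p as [|x p IH]; intros phi c s psi b H.
  - rewrite subf_nil in H. inversion H; subst; reflexivity.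
  - destruct phi; simpl in H; try discriminate; simpl;
      try (destruct x; [discriminate|]); exact (IH _ _ _ _ b H).
Qed.

Definition sprefix (r p : path) := exists t, p = r ++ t /\ t <> [].

Lemma envf_dep p : forall (phi : form P L) c c' s,
  (forall r, sprefix r p -> c r = c' r) -> envf phi p c s = envf phi p c' s.
Proof.
  induction p as [|x p IH]; intros phi c c' s H; simpl; auto.
  assert (H0 : c [] = c' []) by (apply H; exists (x :: p); split; [reflexivity|discriminate]).
  assert (H1 : forall r, sprefix r p -> c (x :: r) = c' (x :: r)).
  { intros r [t [-> Ht]]. apply H. exists t; split; auto. }
  destruct phi; auto; try rewrite H0; apply IH; auto.
Qed.

Lemma upd_same (s : L -> W -> Prop) X A : upd s X A X = A.
Proof.
  extensionality w. apply propositional_extensionality. unfold upd.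
  split; [intros [[_ H]|[H _]]; auto; congruence|auto].
Qed.

Lemma upd_other (s : L -> W -> Prop) X A Y : Y <> X -> upd s X A Y = s Y.
Proof.
  intro HY. extensionality w. apply propositional_extensionality. unfold upd.
  split; [intros [[H _]|[_ H]]; auto; congruence|auto].
Qed.

Lemma envf_stable (phi : form P L) Y c s q t :
  subf phi (q ++ t) <> None ->
  (forall t1 t2, t = t1 ++ t2 -> t2 <> [] -> ~ binds phi (q ++ t1) Y) ->
  envf phi (q ++ t) c s Y = envf phi q c s Y.
Proof.
  revert q. induction t as [|x t IH] using rev_ind; intros q Hs Hb.
  - rewrite app_nil_r; auto.
  - rewrite app_assoc in Hs |- *.
    rewrite subf_app in Hs. destruct (subf phi (q ++ t)) as [psi|] eqn:E; [|congruence].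
    rewrite (@envf_snoc _ _ _ _ _ x E).
    assert (IH' : envf phi (q ++ t) c s Y = envf phi q c s Y).
    { apply IH. congruence. intros t1 t2 -> Ht2. apply (Hb t1 (t2 ++ [x])).
      rewrite app_assoc; auto. destruct t2; simpl; congruence. }
    destruct psi; simpl; auto; rewrite upd_other; auto; intros ->;
      apply (Hb t [x]); auto; try discriminate; eexists; eauto.
Qed.

End Sem.

End Part2.
Import Part2.

Module Part3.
Set Implicit Arguments.

Lemma prefixb_len : forall q r, prefixb q r = true -> length q <= length r.
Proof.
  induction q as [|x q IH]; intros [|y r] H; simpl in *; try discriminate.
  - apply le_n.
  - apply Nat.le_0_l.
  - apply andb_prop in H. destruct H as [_ H]. specialize (IH r H).
    apply le_n_S; auto.
Qed.

Lemma sprefix_len r p : sprefix r p -> length r < length p.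
Proof.
  intros [t [-> Ht]]. rewrite length_app. destruct t; [congruence|simpl]. 
  rewrite <- plus_n_Sm. auto with arith.
Qed.

Lemma sprefix_snoc r p b : sprefix r p -> sprefix r (p ++ [b]).
Proof. intros [t [-> Ht]]. exists (t ++ [b]). rewrite app_assoc. split; auto.
  destruct t; simpl; congruence. Qed.

Lemma sprefix_self p b : sprefix p (p ++ [b]).
Proof. exists [b]; split; auto; discriminate. Qed.

Lemma sprefix_snoc_inv pb p b : sprefix pb (p ++ [b]) -> pb = p \/ sprefix pb p.
Proof.
  intros [t [Ht Hne]]. destruct t as [|x t] using rev_ind; [congruence|].
  rewrite app_assoc in Ht. apply app_inj_tail in Ht. destruct Ht as [Ht _].
  destruct t as [|y t]. { left. rewrite app_nil_r in Ht. auto. }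
  right. exists (y :: t). split; auto. discriminate.
Qed.

Lemma sprefix_trans a b c : sprefix a b -> sprefix b c -> sprefix a c.
Proof.
  intros [t [-> H]] [u [-> H']]. exists (t ++ u). rewrite app_assoc. split; auto.
  destruct t; simpl; congruence.
Qed.

Section Game.
Variable G : ordinal_upto.
Variables P L W : Type.
Variable R : W -> W -> Prop.
Variable V : P -> W -> Prop.
Variable phi0 : form P L.
Variable s0 : L -> W -> Prop.

Lemma set_clock_same (c : clock G) p g : set_clock c p g p = g.
Proof. unfold set_clock. destruct (list_eq_dec bool_dec p p); congruence. Qed.

Lemma set_clock_sprefix (c : clock G) p g r : sprefix r p -> set_clock c p g r = c r.
Proof.
  intro H. unfold set_clock. destruct (list_eq_dec bool_dec r p); auto.
  subst. apply sprefix_len in H. exfalso. apply (Nat.lt_irrefl _ H).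
Qed.

Lemma reset_prefixb_false p r : length r <= length p -> prefixb (p ++ [false]) r = false.
Proof.
  intro H. destruct (prefixb (p ++ [false]) r) eqn:E; auto.
  apply prefixb_len in E. rewrite length_app in E. simpl in E. exfalso.
  rewrite Nat.add_1_r in E. apply (Nat.lt_irrefl (length r)).
  eapply Nat.le_lt_trans; [exact H|exact E].
Qed.

Lemma reset_clock_same (c : clock G) p g : reset_clock phi0 c p g p = g.
Proof. unfold reset_clock. rewrite reset_prefixb_false; auto. apply set_clock_same. Qed.

Lemma reset_clock_sprefix (c : clock G) p g r : sprefix r p -> reset_clock phi0 c p g r = c r.
Proof.
  intro H. unfold reset_clock. rewrite reset_prefixb_false.
  - apply set_clock_sprefix; auto.
  - apply Nat.lt_le_incl, sprefix_len; auto.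
Qed.

Definition env (p : path) (c : clock G) := envf G R V phi0 p c s0.

Definition sem_at (p : path) (c : clock G) (w : W) : Prop :=
  match subf phi0 p with Some psi => sem G R V psi (env p c) w | None => False end.

Definition FF (e : L -> W -> Prop) X (a : form P L) := fun A => sem G R V a (upd e X A).

Lemma subf_child p psi b : subf phi0 p = Some psi -> subf phi0 (p ++ [b]) = subf psi [b].
Proof. intro H. rewrite subf_app, H. auto. Qed.

Lemma env_child_plain p psi b c : subf phi0 p = Some psi ->
  (match psi with FMu _ _ | FNu _ _ => False | _ => True end) ->
  env (p ++ [b]) c = env p c.
Proof.
  intros H Hn. unfold env. rewrite (envf_snoc G R V p phi0 c s0 b H).
  destruct psi; try contradiction; reflexivity.
Qed.

Lemma env_child_mu p X a c c0 : subf phi0 p = Some (FMu X a) ->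
  (forall r, sprefix r p -> c r = c0 r) ->
  env (p ++ [false]) c = upd (env p c0) X (iter_mu G (FF (env p c0) X a) (c p)).
Proof.
  intros H Hc. unfold env. rewrite (envf_snoc G R V p phi0 c s0 false H). simpl.
  rewrite app_nil_r. rewrite (envf_dep G R V phi0 c c0 s0 Hc). reflexivity.
Qed.

Lemma env_child_nu p X a c c0 : subf phi0 p = Some (FNu X a) ->
  (forall r, sprefix r p -> c r = c0 r) ->
  env (p ++ [false]) c = upd (env p c0) X (iter_nu G (FF (env p c0) X a) (c p)).
Proof.
  intros H Hc. unfold env. rewrite (envf_snoc G R V p phi0 c s0 false H). simpl.
  rewrite app_nil_r. rewrite (envf_dep G R V phi0 c c0 s0 Hc). reflexivity.
Qed.


Lemma rf_sprefix p pb : rf phi0 p pb -> sprefix pb p.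
Proof.
  intros [X [H1 [[a [H2|H2]] [[t ->] _]]]]; exists t; split; auto; intros ->;
    rewrite app_nil_r in H1; congruence.
Qed.

Lemma binds_mu_eq pb X X' a : subf phi0 pb = Some (FMu X a) -> binds phi0 pb X' -> X' = X.
Proof. intros H [a' [H'|H']]; rewrite H in H'; congruence. Qed.

Lemma binds_nu_eq pb X X' a : subf phi0 pb = Some (FNu X a) -> binds phi0 pb X' -> X' = X.
Proof. intros H [a' [H'|H']]; rewrite H in H'; congruence. Qed.



Lemma rf_lookup p pb X a (Hb : subf phi0 pb = Some (FMu X a) \/ subf phi0 pb = Some (FNu X a)) :
  rf phi0 p pb -> subf phi0 p = Some (FVar X) /\
    forall c, env p c X = env (pb ++ [false]) c X.
Proof.
  intros [X' [H1 [H2 [[t Ht] Hn]]]].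
  assert (X' = X) by (destruct Hb; [eapply binds_mu_eq|eapply binds_nu_eq]; eauto). subst X'.
  split; auto.
  destruct t as [|b t]. { rewrite Ht, app_nil_r in H1. destruct Hb; congruence. }
  assert (Hb' : b = false).
  { rewrite Ht, subf_app in H1. destruct b; auto. destruct Hb as [E|E]; rewrite E in H1;
      discriminate. }
  subst b. intro c.
  assert (Ht' : p = (pb ++ [false]) ++ t) by (rewrite <- app_assoc; auto).
  rewrite Ht'. unfold env. apply envf_stable.
  - rewrite <- Ht'. congruence.
  - intros t1 t2 -> Ht2. rewrite <- app_assoc. simpl. apply (Hn (false :: t1) t2).
    + rewrite Ht'. rewrite <- !app_assoc. reflexivity.
    + discriminate.
Qed.

Lemma var_lookup_mu p pb X a c : rf phi0 p pb -> subf phi0 pb = Some (FMu X a) ->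
  subf phi0 p = Some (FVar X) /\ env p c X = iter_mu G (FF (env pb c) X a) (c pb).
Proof.
  intros Hr Hb. destruct (@rf_lookup p pb X a (or_introl Hb) Hr) as [H1 H2].
  split; auto. rewrite H2. rewrite (@env_child_mu pb X a c c Hb); auto.
  apply upd_same.
Qed.

Lemma var_lookup_nu p pb X a c : rf phi0 p pb -> subf phi0 pb = Some (FNu X a) ->
  subf phi0 p = Some (FVar X) /\ env p c X = iter_nu G (FF (env pb c) X a) (c pb).
Proof.
  intros Hr Hb. destruct (@rf_lookup p pb X a (or_intror Hb) Hr) as [H1 H2].
  split; auto. rewrite H2. rewrite (@env_child_nu pb X a c c Hb); auto.
  apply upd_same.
Qed.

End Game.

End Part3.
Import Part3.

Module Part4.
Set Implicit Arguments.

Section VB.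
Variables P L : Type.

Definition NB (phi : form P L) p X := forall t1 t2, p = t1 ++ t2 -> ~ binds phi t1 X.
Definition NR (phi : form P L) p X := exists q t, p = q ++ t /\ t <> [] /\ binds phi q X /\
  forall t1 t2, t = t1 ++ t2 -> t1 <> [] -> ~ binds phi (q ++ t1) X.

Lemma vb_step (phi chi : form P L) b p X :
  (forall r, subf phi (b :: r) = subf chi r) ->
  NB chi p X \/ NR chi p X -> NB phi (b :: p) X \/ NR phi (b :: p) X.
Proof.
  intros H1 [Hn|[q [t [-> [Ht [Hq Hm]]]]]].
  - destruct (classic (binds phi [] X)) as [Hb|Hb].
    + right. exists [], (b :: p). split; auto. split; [discriminate|]. split; auto.
      intros [|x t1] t2 E Hne; [congruence|]. simpl in E. injection E; intros E2 E1; subst x.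
      intros [a Ha]. unfold binds in Ha. simpl in Ha. rewrite H1 in Ha.
      apply (Hn t1 t2 E2). exists a; auto.
    + left. intros [|x t1] t2 E. { simpl in E. auto. }
      simpl in E. injection E; intros E2 E1; subst x.
      intros [a Ha]. rewrite H1 in Ha. apply (Hn t1 t2 E2). exists a; auto.
  - right. exists (b :: q), t. split; auto. split; auto. split.
    + destruct Hq as [a Ha]. exists a. rewrite H1. auto.
    + intros t1 t2 E Hne [a Ha]. simpl in Ha. rewrite H1 in Ha. apply (Hm t1 t2 E Hne).
      exists a; auto.
Qed.

Lemma var_bound p : forall (phi : form P L) X, subf phi p = Some (FVar X) ->
  NB phi p X \/ NR phi p X.
Proof.
  induction p as [|b p IH]; intros phi X H.
  - rewrite subf_nil in H. injection H; intros ->. left.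
    intros [|x t1] t2 E; [|discriminate]. intros [a [Ha|Ha]]; discriminate.
  - destruct phi; simpl in H; try discriminate;
      try (destruct b; [discriminate|]);
      try (apply vb_step with (chi := if b then phi2 else phi1); [intro r; destruct b; reflexivity|];
           apply IH; auto);
      (eapply vb_step; [intro r; reflexivity|]; apply IH; eauto).
Qed.

Local Ltac fin bb := match goal with
  | IH : forall _ _, _ , H : _ , Hn : NB _ _ _ |- _ =>
    apply (IH _ _ H); intros t1 t2 E [a Ha]; apply (Hn (bb :: t1) t2);
      [simpl; congruence | exists a; auto] end.

Lemma nb_free p : forall (phi : form P L) X, subf phi p = Some (FVar X) -> NB phi p X ->
  free_in X phi.
Proof.
  induction p as [|b p IH]; intros phi X H Hn.
  - rewrite subf_nil in H. injection H; intros ->. simpl. auto.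
  - assert (Hroot : ~ binds phi [] X) by (apply (Hn [] (b :: p)); auto).
    destruct phi; simpl in H; try discriminate; simpl;
    [ destruct b; [right; fin true|left; fin false]
    | destruct b; [right; fin true|left; fin false]
    | destruct b; [discriminate|fin false]
    | destruct b; [discriminate|fin false]
    | destruct b; [discriminate|split; [intros ->; apply Hroot; exists phi; left; reflexivity|fin false]]
    | destruct b; [discriminate|split; [intros ->; apply Hroot; exists phi; right; reflexivity|fin false]]].
Qed.

Lemma var_has_rf (phi : form P L) p X : sentence phi -> subf phi p = Some (FVar X) ->
  exists pb, rf phi p pb.
Proof.
  intros Hs H. destruct (var_bound _ _ H) as [Hn|[q [t [E [Ht [Hq Hm]]]]]].
  - exfalso. apply (Hs X). eapply nb_free; eauto.
  - exists q. exists X. split; auto. split; auto. split; [exists t; auto|].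
    intros s1 s2 E' Hne. rewrite E in E'. apply app_inv_head in E'. apply (Hm s1 s2); auto.
Qed.
End VB.

End Part4.
Import Part4.

Module Part5.
Unset Implicit Arguments.

Section Main.
Variable G : ordinal_upto.
Variables P L W : Type.
Variable R : W -> W -> Prop.
Variable V : P -> W -> Prop.
Variable phi0 : form P L.
Variable s0 : L -> W -> Prop.

Notation env := (@Part3.env G P L W R V phi0 s0).
Notation sem_at := (@Part3.sem_at G P L W R V phi0 s0).
Notation FF := (@Part3.FF G P L W R V).

Definition plain (psi : form P L) := match psi with FMu _ _ | FNu _ _ => False | _ => True end.

Lemma sem_at_plain p psi b chi c w : subf phi0 p = Some psi -> plain psi ->
  subf psi [b] = Some chi -> (sem_at (p ++ [b]) c w <-> sem G R V chi (env p c) w).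
Proof.
  intros H Hp Hc. unfold Part3.sem_at. rewrite (subf_child phi0 p b H), Hc.
  rewrite (env_child_plain R V phi0 s0 p b c H Hp). tauto.
Qed.

Lemma sem_at_mu p X a c c0 w : subf phi0 p = Some (FMu X a) ->
  (forall r, sprefix r p -> c r = c0 r) ->
  (sem_at (p ++ [false]) c w <-> FF (env p c0) X a (iter_mu G (FF (env p c0) X a) (c p)) w).
Proof.
  intros H Hc. unfold Part3.sem_at. rewrite (subf_child phi0 p false H).
  replace (subf (FMu X a) [false]) with (Some a) by (simpl; rewrite subf_nil; reflexivity).
  rewrite (env_child_mu G R V phi0 s0 c c0 H Hc). tauto.
Qed.

Lemma sem_at_nu p X a c c0 w : subf phi0 p = Some (FNu X a) ->
  (forall r, sprefix r p -> c r = c0 r) ->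
  (sem_at (p ++ [false]) c w <-> FF (env p c0) X a (iter_nu G (FF (env p c0) X a) (c p)) w).
Proof.
  intros H Hc. unfold Part3.sem_at. rewrite (subf_child phi0 p false H).
  replace (subf (FNu X a) [false]) with (Some a) by (simpl; rewrite subf_nil; reflexivity).
  rewrite (env_child_nu G R V phi0 s0 c c0 H Hc). tauto.
Qed.

Lemma monoFF e X a : monoF (FF e X a).
Proof. exact (monoF_sem G R V a e X). Qed.

Lemma win_sem sigma pos : win R V phi0 sigma pos -> sem_at (pocc pos) (pclk pos) (pw pos).
Proof.
  induction 1; simpl in *; unfold Part3.sem_at.
  - rewrite H. simpl. auto.
  - rewrite H. simpl. auto.
  - rewrite H. simpl. left. exact (proj1 (sem_at_plain p _ false a c w H I (subf_nil a)) IHwin).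
  - rewrite H. simpl. right. exact (proj1 (sem_at_plain p _ true b c w H I (subf_nil b)) IHwin).
  - rewrite H. simpl. split.
    + exact (proj1 (sem_at_plain p _ false a c w H I (subf_nil a)) IHwin1).
    + exact (proj1 (sem_at_plain p _ true b c w H I (subf_nil b)) IHwin2).
  - rewrite H. simpl. exists v. split; auto.
    exact (proj1 (sem_at_plain p _ false a c v H I (subf_nil a)) IHwin).
  - rewrite H. simpl. intros v Hv.
    exact (proj1 (sem_at_plain p _ false a c v H I (subf_nil a)) (H1 v Hv)).
  - rewrite H. simpl.
    rewrite (sem_at_mu p X a (set_clock c p g) c w H (fun r Hr => set_clock_sprefix c g Hr)) in IHwin.
    rewrite set_clock_same in IHwin.
    apply (mu_char G (monoFF _ _ _)). eauto.
  - rewrite H. simpl. apply (nu_char G (monoFF _ _ _)). intros h Hh.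
    specialize (H1 h Hh).
    rewrite (sem_at_nu p X a (set_clock c p h) c w H (fun r Hr => set_clock_sprefix c h Hr)) in H1.
    rewrite set_clock_same in H1. auto.
  - destruct (var_lookup_mu R V s0 c H H0) as [E1 E2]. rewrite E1. simpl.
    rewrite E2.
    rewrite (sem_at_mu pb X a (reset_clock phi0 c pb g) c w H0 (fun r Hr => reset_clock_sprefix phi0 c g Hr)) in IHwin.
    rewrite reset_clock_same in IHwin.
    apply (mu_char G (monoFF _ _ _)). eauto.
  - destruct (var_lookup_nu R V s0 c H H0) as [E1 E2]. rewrite E1. simpl.
    rewrite E2. apply (nu_char G (monoFF _ _ _)). intros h Hh.
    specialize (H2 h Hh).
    rewrite (sem_at_nu pb X a (reset_clock phi0 c pb h) c w H0 (fun r Hr => reset_clock_sprefix phi0 c h Hr)) in H2.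
    rewrite reset_clock_same in H2. auto.
Qed.

End Main.

End Part5.
Import Part5.

Module Part6.
Unset Implicit Arguments.

Section Main2.
Variable G : ordinal_upto.
Variables P L W : Type.
Variable R : W -> W -> Prop.
Variable V : P -> W -> Prop.
Variable phi0 : form P L.
Variable s0 : L -> W -> Prop.
Hypothesis Hsent : sentence phi0.
Hypothesis Hnf : normal_form phi0.

Notation env := (@Part3.env G P L W R V phi0 s0).
Notation sem_at := (@Part3.sem_at G P L W R V phi0 s0).
Notation FF := (@Part3.FF G P L W R V).

Definition good (ps : pos G W) (ch : Defs.choice G W) : Prop :=
  let w := pw ps in let p := pocc ps in let c := pclk ps in
  (exists a b, subf phi0 p = Some (FOr a b) /\
     ((ch = ChLeft G W /\ sem_at (p ++ [false]) c w) \/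
      (ch = ChRight G W /\ sem_at (p ++ [true]) c w))) \/
  (exists a v, subf phi0 p = Some (FDia a) /\ ch = ChWorld G v /\ R w v /\
     sem_at (p ++ [false]) c v) \/
  (exists X a g, subf phi0 p = Some (FMu X a) /\ ch = ChOrd G W g /\ olt G g (top G) /\
     sem_at (p ++ [false]) (set_clock c p g) w) \/
  (exists pb X a g, rf phi0 p pb /\ subf phi0 pb = Some (FMu X a) /\ ch = ChOrd G W g /\
     olt G g (c pb) /\ sem_at (pb ++ [false]) (reset_clock phi0 c pb g) w).

Definition sig0 : strategy G W := fun ps =>
  match excluded_middle_informative (exists ch, good ps ch) with
  | left H => Some (proj1_sig (constructive_indefinite_description _ H))
  | right _ => None
  end.

Lemma sig0_spec ps ch : good ps ch -> exists ch', sig0 ps = Some ch' /\ good ps ch'.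
Proof.
  intro H. unfold sig0. destruct (excluded_middle_informative _) as [H'|H'].
  - destruct (constructive_indefinite_description _ H') as [x Hx]. simpl. eauto.
  - exfalso. eauto.
Qed.

Lemma rf_unique q pb pb' : rf phi0 q pb -> rf phi0 q pb' -> pb = pb'.
Proof.
  intros [X [H1 [H2 _]]] [X' [H1' [H2' _]]]. rewrite H1 in H1'. injection H1'; intros ->.
  eapply Hnf; eauto.
Qed.

Definition Esc (p : path) (c : clock G) : Prop :=
  forall q pb c' w, rf phi0 q pb -> sprefix pb p -> (forall r, sprefix r p -> c' r = c r) ->
    sem_at q c' w -> win R V phi0 sig0 (Pos w q c').

Lemma Esc_plain p psi b c : subf phi0 p = Some psi -> plain P L psi -> Esc p c -> Esc (p ++ [b]) c.
Proof.
  intros H Hp He q pb c' w Hr Hs Hc Hw.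
  destruct (sprefix_snoc_inv p b Hs) as [->|Hs'].
  - exfalso. destruct Hr as [X [_ [[a [E|E]] _]]]; rewrite H in E; injection E; intros; subst; exact Hp.
  - apply (He q pb c' w Hr Hs'); auto. intros r Hr'. apply Hc. apply sprefix_snoc; auto.
Qed.

Lemma not_var_good q X c w ch : subf phi0 q = Some (FVar X) -> good (Pos w q c) ch ->
  exists pb Y a g, rf phi0 q pb /\ subf phi0 pb = Some (FMu Y a) /\ ch = ChOrd G W g /\
     olt G g (c pb) /\ sem_at (pb ++ [false]) (reset_clock phi0 c pb g) w.
Proof.
  intros H [[a [b [E _]]]|[[a [v [E _]]]|[[Y [a [g [E _]]]]|Hg]]]; simpl in *;
    try (rewrite H in E; discriminate). exact Hg.
Qed.

Theorem sem_win : forall psi p, subf phi0 p = Some psi -> forall c, Esc p c ->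
  forall w, sem G R V psi (env p c) w -> win R V phi0 sig0 (Pos w p c).
Proof.
  induction psi as [q|q|X|a IHa b IHb|a IHa b IHb|a IHa|a IHa|X a IHa|X a IHa];
    intros p Hp c He w Hw; simpl in Hw.
  - eapply win_prop; eauto.
  - eapply win_nprop; eauto.
  - destruct (var_has_rf p Hsent Hp) as [pb Hr].
    apply (He p pb c w Hr (rf_sprefix Hr)); auto.
    unfold Part3.sem_at. rewrite Hp. exact Hw.
  -
    assert (Hg : exists ch, good (Pos w p c) ch).
    { destruct Hw as [Hw|Hw].
      - exists (ChLeft G W). left. exists a, b. split; auto. left. split; auto.
        exact (proj2 (sem_at_plain G P L W R V phi0 s0 p _ false a c w Hp I (subf_nil a)) Hw).
      - exists (ChRight G W). left. exists a, b. split; auto. right. split; auto.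
        exact (proj2 (sem_at_plain G P L W R V phi0 s0 p _ true b c w Hp I (subf_nil b)) Hw). }
    destruct Hg as [ch Hg]. destruct (sig0_spec _ _ Hg) as [ch' [Hs Hg']].
    destruct Hg' as [[a' [b' [E [[-> Hw']|[-> Hw']]]]]|[[a' [v [E _]]]|[[Y [a' [g [E _]]]]|[pb [Y [a' [g [Hr _]]]]]]]];
      simpl in *; try (rewrite Hp in E); try discriminate.
    + injection E; intros <- <-.
      eapply win_or_l; eauto. apply (IHa (p ++ [false])).
      * rewrite (subf_child phi0 p false Hp). apply subf_nil.
      * apply (Esc_plain p _ false c Hp I He).
      * rewrite (env_child_plain R V phi0 s0 p false c Hp I).
        exact (proj1 (sem_at_plain G P L W R V phi0 s0 p _ false a c w Hp I (subf_nil a)) Hw').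
    + injection E; intros <- <-.
      eapply win_or_r; eauto. apply (IHb (p ++ [true])).
      * rewrite (subf_child phi0 p true Hp). apply subf_nil.
      * apply (Esc_plain p _ true c Hp I He).
      * rewrite (env_child_plain R V phi0 s0 p true c Hp I).
        exact (proj1 (sem_at_plain G P L W R V phi0 s0 p _ true b c w Hp I (subf_nil b)) Hw').
    + destruct Hr as [X [E' _]]. simpl in E'. rewrite Hp in E'. discriminate.
  -
    destruct Hw as [Hw1 Hw2]. eapply win_and; eauto.
    + apply (IHa (p ++ [false])); [rewrite (subf_child phi0 p false Hp); apply subf_nil|
        apply (Esc_plain p _ false c Hp I He)|].
      rewrite (env_child_plain R V phi0 s0 p false c Hp I). exact Hw1.
    + apply (IHb (p ++ [true])); [rewrite (subf_child phi0 p true Hp); apply subf_nil|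
        apply (Esc_plain p _ true c Hp I He)|].
      rewrite (env_child_plain R V phi0 s0 p true c Hp I). exact Hw2.
  -
    destruct Hw as [v [Hv Hw]].
    assert (Hg : good (Pos w p c) (ChWorld G v)).
    { right. left. exists a, v. split; auto. split; auto. split; auto.
      exact (proj2 (sem_at_plain G P L W R V phi0 s0 p _ false a c v Hp I (subf_nil a)) Hw). }
    destruct (sig0_spec _ _ Hg) as [ch' [Hs Hg']].
    destruct Hg' as [[a' [b' [E _]]]|[[a' [v' [E [-> [Hv' Hw']]]]]|[[Y [a' [g [E _]]]]|[pb [Y [a' [g [Hr _]]]]]]]];
      simpl in *; try (rewrite Hp in E); try discriminate.
    + injection E; intros <-.
      eapply win_dia; eauto. apply (IHa (p ++ [false])).
      * rewrite (subf_child phi0 p false Hp). apply subf_nil.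
      * apply (Esc_plain p _ false c Hp I He).
      * rewrite (env_child_plain R V phi0 s0 p false c Hp I).
        exact (proj1 (sem_at_plain G P L W R V phi0 s0 p _ false a c v' Hp I (subf_nil a)) Hw').
    + destruct Hr as [X [E' _]]. simpl in E'. rewrite Hp in E'. discriminate.
  -
    eapply win_box; eauto. intros v Hv. apply (IHa (p ++ [false])).
    + rewrite (subf_child phi0 p false Hp). apply subf_nil.
    + apply (Esc_plain p _ false c Hp I He).
    + rewrite (env_child_plain R V phi0 s0 p false c Hp I). auto.
  -
    assert (Inner : forall g c'', (forall r, sprefix r p -> c'' r = c r) -> c'' p = g ->
        forall w, FF (env p c) X a (iter_mu G (FF (env p c) X a) g) w ->
        win R V phi0 sig0 (Pos w (p ++ [false]) c'')).
    { intro g. induction g as [g IHg] using (well_founded_ind (olt_wf G)).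
      intros c'' Hc'' Hg w' Hw'.
      apply (IHa (p ++ [false])).
      - rewrite (subf_child phi0 p false Hp). apply subf_nil.
      - intros q pb c3 w3 Hr Hs Hc3 Hsem.
        assert (Hc3c : forall r, sprefix r p -> c3 r = c r).
        { intros r Hr'. rewrite Hc3 by (apply sprefix_snoc; auto). auto. }
        destruct (sprefix_snoc_inv p false Hs) as [->|Hs'].
        + destruct (var_lookup_mu R V s0 c3 Hr Hp) as [Eq Elook].
          unfold Part3.sem_at in Hsem. rewrite Eq in Hsem. simpl in Hsem. rewrite Elook in Hsem.
          assert (Eenv : env p c3 = env p c) by (unfold Part3.env; apply envf_dep; auto).
          assert (Ec3 : c3 p = g) by (rewrite Hc3 by apply sprefix_self; auto).
          rewrite Eenv, Ec3 in Hsem.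
          apply (mu_char G (monoFF G P L W R V _ _ _)) in Hsem.
          destruct Hsem as [h [Hh Hsem]].
          assert (Hgood : good (Pos w3 q c3) (ChOrd G W h)).
          { right. right. right. simpl. exists p, X, a, h. split; auto. split; auto. split; auto.
            split; [rewrite Ec3; auto|].
            apply (proj2 (sem_at_mu G P L W R V phi0 s0 p X a (reset_clock phi0 c3 p h) c w3 Hp
              (fun r Hr' => eq_trans (reset_clock_sprefix phi0 c3 h Hr') (Hc3c r Hr')))).
            rewrite reset_clock_same. exact Hsem. }
          destruct (sig0_spec _ _ Hgood) as [ch' [Hs0 Hg']].
          destruct (not_var_good q X c3 w3 ch' Eq Hg') as [pb' [Y [a' [g' [Hr' [Hp' [-> [Hlt Hsm]]]]]]]].
          assert (pb' = p) by (eapply rf_unique; eauto). subst pb'.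
          rewrite Hp in Hp'. injection Hp'; intros <- <-.
          eapply win_var_mu; [exact Hr|exact Hp|exact Hs0|exact Hlt|].
          rewrite Ec3 in Hlt.
          apply (IHg g' Hlt).
          * intros r Hr''. rewrite reset_clock_sprefix; auto.
          * apply reset_clock_same.
          * rewrite (sem_at_mu G P L W R V phi0 s0 p X a (reset_clock phi0 c3 p g') c w3 Hp
              (fun r Hr' => eq_trans (reset_clock_sprefix phi0 c3 g' Hr') (Hc3c r Hr'))) in Hsm.
            rewrite reset_clock_same in Hsm. exact Hsm.
        + apply (He q pb c3 w3 Hr Hs'); auto.
      - rewrite (env_child_mu G R V phi0 s0 c'' c Hp Hc''). rewrite Hg. exact Hw'. }
    change (iter_mu G (FF (env p c) X a) (top G) w) in Hw.
    apply (mu_char G (monoFF G P L W R V _ _ _)) in Hw. destruct Hw as [g [Hgt Hw]].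
    assert (Hgood : good (Pos w p c) (ChOrd G W g)).
    { right. right. left. exists X, a, g. split; auto. split; auto. split; auto.
      apply (proj2 (sem_at_mu G P L W R V phi0 s0 p X a (set_clock c p g) c w Hp
              (fun r Hr => set_clock_sprefix c g Hr))).
      rewrite set_clock_same. exact Hw. }
    destruct (sig0_spec _ _ Hgood) as [ch' [Hs Hg']].
    destruct Hg' as [[a' [b' [E _]]]|[[a' [v [E _]]]|[[Y [a' [g' [E [-> [Hlt Hsm]]]]]]|[pb [Y [a' [g' [Hr _]]]]]]]];
      simpl in *; try (rewrite Hp in E); try discriminate.
    + injection E; intros <- <-.
      eapply win_mu; [exact Hp|exact Hs|exact Hlt|].
      apply (Inner g' (set_clock c p g')).
      * intros r Hr. apply set_clock_sprefix; auto.
      * apply set_clock_same.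
      * rewrite (sem_at_mu G P L W R V phi0 s0 p X a (set_clock c p g') c w Hp
              (fun r Hr => set_clock_sprefix c g' Hr)) in Hsm.
        rewrite set_clock_same in Hsm. exact Hsm.
    + destruct Hr as [Z [E' _]]. simpl in E'. rewrite Hp in E'. discriminate.
  -
    assert (Inner : forall g c'', (forall r, sprefix r p -> c'' r = c r) -> c'' p = g ->
        forall w, FF (env p c) X a (iter_nu G (FF (env p c) X a) g) w ->
        win R V phi0 sig0 (Pos w (p ++ [false]) c'')).
    { intro g. induction g as [g IHg] using (well_founded_ind (olt_wf G)).
      intros c'' Hc'' Hg w' Hw'.
      apply (IHa (p ++ [false])).
      - rewrite (subf_child phi0 p false Hp). apply subf_nil.
      - intros q pb c3 w3 Hr Hs Hc3 Hsem.
        assert (Hc3c : forall r, sprefix r p -> c3 r = c r).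
        { intros r Hr'. rewrite Hc3 by (apply sprefix_snoc; auto). auto. }
        destruct (sprefix_snoc_inv p false Hs) as [->|Hs'].
        + destruct (var_lookup_nu R V s0 c3 Hr Hp) as [Eq Elook].
          unfold Part3.sem_at in Hsem. rewrite Eq in Hsem. simpl in Hsem. rewrite Elook in Hsem.
          assert (Eenv : env p c3 = env p c) by (unfold Part3.env; apply envf_dep; auto).
          assert (Ec3 : c3 p = g) by (rewrite Hc3 by apply sprefix_self; auto).
          rewrite Eenv, Ec3 in Hsem.
          rewrite (nu_char G (monoFF G P L W R V _ _ _)) in Hsem.
          eapply win_var_nu; [exact Hr|exact Hp|].
          intros h Hh. rewrite Ec3 in Hh.
          apply (IHg h Hh).
          * intros r Hr''. rewrite reset_clock_sprefix; auto.
          * apply reset_clock_same.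
          * apply Hsem; auto.
        + apply (He q pb c3 w3 Hr Hs'); auto.
      - rewrite (env_child_nu G R V phi0 s0 c'' c Hp Hc''). rewrite Hg. exact Hw'. }
    change (iter_nu G (FF (env p c) X a) (top G) w) in Hw.
    rewrite (nu_char G (monoFF G P L W R V _ _ _)) in Hw.
    eapply win_nu; [exact Hp|]. intros g Hg.
    apply (Inner g (set_clock c p g)).
    + intros r Hr. apply set_clock_sprefix; auto.
    + apply set_clock_same.
    + apply Hw; auto.
Qed.


End Main2.

End Part6.
Import Part6.

Unset Implicit Arguments.

Theorem mainTheorem3 (G : ordinal_upto) (G_pos : exists a, olt G a (top G))
  (P L W : Type) (R : W -> W -> Prop) (V : P -> W -> Prop)
  (w0 : W) (phi0 : form P L)
  (Hsent : sentence phi0) (Hnf : normal_form phi0) :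
  sem_holds G R V phi0 w0 <-> game_holds G R V phi0 w0.
Proof.
  split.
  - intro H. set (s0 := fun (_ : L) (_ : W) => False).
    exists (sig0 G P L W R V phi0 s0).
    apply (sem_win G P L W R V phi0 s0 Hsent Hnf phi0 [] (subf_nil phi0)).
    + intros q pb c' w Hr [t [Ht Hne]]. destruct pb; destruct t; simpl in Ht; try discriminate; contradiction.
    + exact (H s0).
  - intros [sigma Hw] s.
    pose proof (win_sem G P L W R V phi0 s sigma _ Hw) as H. simpl in H.
    unfold Part3.sem_at in H. rewrite subf_nil in H. exact H.
Qed.
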